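(* Let $\mathcal{C}=\{\mathcal{N}_1,\dots,\mathcal{N}_k\}$ be a clustering of a finite set of elements into $k$ clusters in which every element belongs to at least one and at most two clusters. If for every triple of distinct clusters $p,q,r\in[k]$ we have $\mathcal{N}_p\setminus(\mathcal{N}_q\cup\mathcal{N}_r)\neq\emptyset$, then every cluster $\mathcal{N}_i$ is maximal.
   Context: Two elements test positive if they belong to a common cluster. A cluster $\mathcal{N}_i$ is maximal if there is no element $x\notin\mathcal{N}_i$ that tests positive with every element of $\mathcal{N}_i$. *)

(* Defs.v *)
From mathcomp Require Import all_boot.
Set Implicit Arguments. Unset Strict Implicit. Unset Printing Implicit Defensive.

Definition tests_positive (T : finType) (k : nat) (N : 'I_k -> {set T}) (x y : T) : Prop :=
  exists j : 'I_k, x \in N j /\ y \in N j.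

Definition maximal_cluster (T : finType) (k : nat) (N : 'I_k -> {set T}) (i : 'I_k) : Prop :=
  ~ exists x : T, x \notin N i /\ (forall y, y \in N i -> tests_positive N x y).

Definition nclusters (T : finType) (k : nat) (N : 'I_k -> {set T}) (x : T) : nat :=
  #|[set j : 'I_k | x \in N j]|.

(* Main.v *)
Require Import Defs.
From mathcomp Require Import all_boot.

Theorem lemma6 (T : finType) (k : nat) (N : 'I_k -> {set T}) :
  2 < k ->
  (forall x : T, 1 <= nclusters N x <= 2) ->
  (forall p q r : 'I_k, p != q -> p != r -> q != r ->
     N p :\: (N q :|: N r) != set0) ->
  forall i : 'I_k, maximal_cluster N i.
Proof.
move=> hk hcl htr i [x [xNi hpos]].
have /andP [h1 h2] := hcl x.
rewrite /nclusters in h1 h2.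
set S := [set j : 'I_k | x \in N j] in h1 h2.
have [a aS] : exists a, a \in S by apply/set0Pn; rewrite -card_gt0.
have xa : x \in N a by move: aS; rewrite inE.
have ai : a != i by apply: contraNneq xNi => <-.
suff [q [r [qi ri qr hall]]] : exists q r, [/\ q != i, r != i, q != r &
    forall j, x \in N j -> (j == q) || (j == r)].
  have := htr i q r; rewrite eq_sym qi eq_sym ri qr => /(_ isT isT isT).
  case/set0Pn => y; rewrite !inE negb_or => /andP [/andP [yq yr] yi].
  have [j [xj yj]] := hpos y yi.
  by case/orP: (hall j xj) => /eqP ej; subst j; [rewrite yj in yq | rewrite yj in yr].
case: (pickP (fun b => (b != a) && (x \in N b))) => [b /andP [ba xb] | nob].
  have bi : b != i by apply: contraNneq xNi => <-.
  exists a, b; split => //; first by rewrite eq_sym.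
  move=> j xj; apply/negPn/negP; rewrite negb_or => /andP [ja jb].
  have : [set a; b] \proper S.
    apply/properP; split.
      by apply/subsetP => z; rewrite !inE => /orP [] /eqP ->; rewrite ?xa ?xb.
    by exists j; rewrite !inE ?xj // negb_or ja jb.
  move/proper_card; rewrite cards2 eq_sym ba => h3.
  by rewrite ltnNge h2 in h3.
have : ~~ ([set: 'I_k] \subset [set i; a]).
  apply/negP => /subset_leq_card; rewrite cardsT card_ord => h.
  have h' : k <= 2 by apply: leq_trans h _; rewrite cards2; case: (i != a).
  by have := leq_ltn_trans h' hk; rewrite ltnn.
case/subsetPn => r _; rewrite !inE negb_or => /andP [ri ra].
exists a, r; split => //; first by rewrite eq_sym.
move=> j xj; apply/orP; left; apply/negPn/negP => ja.
by have := nob j; rewrite ja xj.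
Qed.
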